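(* Let $\Lambda$ be a (non-degenerate) real interval. A PAF $\psi:\mathcal P^N\to\mathcal P$ is Level-SP, unanimous and strong plausibility preserving if and only if it is dictatorial, i.e. there is $i\in N$ with $\psi(\mathbf p)=p_i$ for all $\mathbf p$.
   Context: Let $N=\{1,\dots,n\}$, $\mathcal P$ the Borel probability measures on $\Lambda$, $\mathcal C$ the CDFs on $\Lambda$, $\pi(p)(a)=p(\{x\in\Lambda:x\le a\})$. A PAF is a map $\psi:\mathcal P^N\to\mathcal P$ with associated CAF $\Psi$ given by $\Psi(\pi(p_1),\dots,\pi(p_n))=\pi(\psi(p_1,\dots,p_n))$; $P_i=\pi(p_i)$. $\mathbf z_{-i}(z_i')$ is $\mathbf z$ with $i$-th coordinate replaced by $z_i'$. $\psi$ is Level-SP if for every $i$, $\mathbf P$, $P_i'$, $a$: $P_i(a)<\Psi(\mathbf P)(a)\Rightarrow\Psi(\mathbf P)(a)\le\Psi(\mathbf P_{-i}(P_i'))(a)$ and $P_i(a)>\Psi(\mathbf P)(a)\Rightarrow\Psi(\mathbf P)(a)\ge\Psi(\mathbf P_{-i}(P_i'))(a)$. $\psi$ is unanimous if $\psi(p,\dots,p)=p$. $\psi$ is strong plausibility preserving if for every profile $\mathbf p$ and every Borel set $A\subseteq\Lambda$: if $p_i(A)>0$ for all $i\in N$ then $\psi(\mathbf p)(A)>0$. *)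

(* Defs.v *)
From mathcomp Require Import all_boot all_order all_algebra.
From mathcomp Require Import all_classical all_reals.
From mathcomp Require Import ereal topology normedtype sequences measure lebesgue_measure probability.
Set Implicit Arguments. Unset Strict Implicit. Unset Printing Implicit Defensive.
Import Order.TTheory GRing.Theory Num.Theory.
Local Open Scope classical_set_scope.
Local Open Scope ring_scope.

(* Borel probability measures on the interval Lambda, represented as Borel
   probability measures on R that give full mass to Lambda. *)
Definition ProbOn (R : realType) (L : interval R) : Type :=
  {P : probability R R | P (~` [set` L]) = 0%E}.

Definition pm (R : realType) (L : interval R) (p : ProbOn L) : probability R R :=
  proj1_sig p.

Definition cdf (R : realType) (L : interval R) (p : ProbOn L) (a : R) : \bar R :=
  pm p [set x | x \in L /\ x <= a].

Definition meq (R : realType) (L : interval R) (p q : ProbOn L) : Prop :=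
  forall A : set R, measurable A -> A `<=` [set` L] -> pm p A = pm q A.

Definition profile (R : realType) (L : interval R) (n : nat) := 'I_n -> ProbOn L.

Definition PAF (R : realType) (L : interval R) (n : nat) :=
  profile L n -> ProbOn L.

Definition upd (R : realType) (L : interval R) (n : nat)
  (p : profile L n) (i : 'I_n) (q : ProbOn L) : profile L n :=
  fun j => if j == i then q else p j.

Definition level_SP (R : realType) (L : interval R) (n : nat) (psi : PAF L n) : Prop :=
  forall (i : 'I_n) (p : profile L n) (q : ProbOn L) (a : R), a \in L ->
    ((cdf (p i) a < cdf (psi p) a)%E -> (cdf (psi p) a <= cdf (psi (upd p i q)) a)%E) /\
    ((cdf (p i) a > cdf (psi p) a)%E -> (cdf (psi p) a >= cdf (psi (upd p i q)) a)%E).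

Definition unanimous (R : realType) (L : interval R) (n : nat) (psi : PAF L n) : Prop :=
  forall q : ProbOn L, meq (psi (fun _ => q)) q.

Definition strong_plausibility_preserving (R : realType) (L : interval R) (n : nat)
  (psi : PAF L n) : Prop :=
  forall (p : profile L n) (A : set R), measurable A -> A `<=` [set` L] ->
    (forall i, (0 < pm (p i) A)%E) -> (0 < pm (psi p) A)%E.

Definition dictatorial (R : realType) (L : interval R) (n : nat) (psi : PAF L n) : Prop :=
  exists i : 'I_n, forall p : profile L n, meq (psi p) (p i).

(* Main.v *)
Require Import Defs.
From mathcomp Require Import all_boot all_order all_algebra.
From mathcomp Require Import all_classical all_reals.
From mathcomp Require Import ereal topology normedtype sequences measure lebesgue_measure probability.
From mathcomp Require Import numfun.
From mathcomp Require Import ring lra.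
Import Order.TTheory GRing.Theory Num.Theory.
Local Open Scope classical_set_scope.
Local Open Scope ring_scope.
Set Implicit Arguments. Unset Strict Implicit. Unset Printing Implicit Defensive.

Lemma nnp_ge0 (R : realType) (x : R) : 0 <= Num.max x 0.
Proof. by rewrite le_max lexx orbT. Qed.
Definition nnp (R : realType) (x : R) : {nonneg R} := NngNum (nnp_ge0 x).

Notation cdfL := Defs.cdf.

Section A.
Context (R : realType) (L : interval R).

Lemma itv_conv x y z : x \in L -> z \in L -> x <= y -> y <= z -> y \in L.
Proof.
case: L => bl br; rewrite !itv_boundlr => /andP[h1 _] /andP[_ h2] xy yz.
apply/andP; split; first by apply: (le_trans h1); rewrite bnd_simp.
by apply: le_trans h2; rewrite bnd_simp.
Qed.

Definition dmu (ws zs : seq R) :=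
  msum (fun i => mscale (nnp (nth 0 ws i)) (\d_(nth 0 zs i))) (size ws).
Definition PP (ws zs : seq R) : probability R R := mnormalize (dmu ws zs) (\d_(0:R)).

Definition Cond (ws zs : seq R) : Prop :=
  (forall i, (i < size ws)%N -> 0 <= nth 0 ws i /\ nth 0 zs i \in L) /\
  \sum_(i < size ws) nth 0 ws i = 1.

Lemma dmuE ws zs U : Cond ws zs ->
  dmu ws zs U = (\sum_(i < size ws) nth 0 ws i * (\1_U (nth 0 zs i)))%:E.
Proof.
move=> [h _]; rewrite /dmu /msum /mscale /= sumEFin; congr (_%:E).
apply: eq_bigr => i _; congr (_ * _) => /=.
by apply/max_idPl; case: (h i (ltn_ord i)).
Qed.

Lemma mnormE (mu : {measure set R -> \bar R}) (P : probability R R) U :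
  mu setT = 1%E -> mnormalize mu P U = mu U.
Proof. by move=> h; rewrite /mnormalize h onee_eq0 /= invr1 mule1. Qed.

Lemma PPE ws zs U : Cond ws zs -> PP ws zs U = dmu ws zs U.
Proof.
move=> c.
have H1 : dmu ws zs [set: R] = 1%E.
  rewrite dmuE //; congr (_%:E); rewrite -[RHS](proj2 c); apply: eq_bigr => i _.
  by rewrite indicE mem_set // mulr1.
by rewrite /PP; apply: mnormE.
Qed.

Lemma PP_notL ws zs : Cond ws zs -> PP ws zs (~` [set` L]) = 0%E.
Proof.
move=> c; rewrite PPE // dmuE //; congr (_%:E); rewrite big1 // => i _.
have hz := proj2 (proj1 c i (ltn_ord i)).
by rewrite indicE memNset ?mulr0 //= => /(_ hz).
Qed.

Definition mkP (dflt : ProbOn L) (ws zs : seq R) : ProbOn L :=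
  match pselect (Cond ws zs) with
  | left h => exist _ (PP ws zs) (PP_notL h)
  | right _ => dflt end.

Lemma cdf_mkP dflt ws zs y : Cond ws zs ->
  cdfL (mkP dflt ws zs) y = (\sum_(i < size ws) nth 0 ws i * (if nth 0 zs i <= y then 1 else 0))%:E.
Proof.
move=> c; rewrite /Defs.cdf /mkP; case: pselect => // h /=.
rewrite PPE // dmuE //; congr (_%:E); apply: eq_bigr => i _.
rewrite indicE; congr (_ * _).
have hi := proj2 (proj1 c i (ltn_ord i)).
case: ifPn => hy.
  by rewrite mem_set.
by rewrite memNset // => -[_ h2]; move: hy; rewrite h2.
Qed.


Definition Lle (a : R) : set R := [set x | x \in L /\ x <= a].

Lemma LleE a : Lle a = [set` L] `&` [set` `]-oo, a]].
Proof.
apply/seteqP; split => x /=.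
  by move=> [h1 h2]; split => //; rewrite in_itv /= h2.
by move=> [h1]; rewrite in_itv /= => h2.
Qed.

Lemma Lle_meas a : measurable (Lle a).
Proof. by rewrite LleE; apply: measurableI; exact: measurable_itv. Qed.

Lemma Lle_sub a : Lle a `<=` [set` L].
Proof. by move=> x []. Qed.

Lemma cdf_ge0 (p : ProbOn L) a : (0 <= cdfL p a)%E.
Proof. exact: measure_ge0. Qed.

Lemma cdf_le1 (p : ProbOn L) a : (cdfL p a <= 1)%E.
Proof. by apply: probability_le1; exact: Lle_meas. Qed.

Lemma cdf_fin (p : ProbOn L) a : cdfL p a \is a fin_num.
Proof. by rewrite ge0_fin_numE ?cdf_ge0 // (le_lt_trans (cdf_le1 p a)) // ltey. Qed.

Lemma cdf_mono (p : ProbOn L) a b : a <= b -> (cdfL p a <= cdfL p b)%E.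
Proof.
move=> ab; apply: le_measure; rewrite ?inE; try exact: Lle_meas.
by move=> x [h1 h2]; split => //; exact: le_trans ab.
Qed.

Lemma pmL (p : ProbOn L) : pm p [set` L] = 1%E.
Proof.
have h := proj2_sig p.
have hx : pm p [set` L] \is a fin_num.
  rewrite ge0_fin_numE ?measure_ge0 //.
  by rewrite (le_lt_trans (probability_le1 _ (measurable_itv L))) // ltey.
have e := probability_setC (pm p) (measurable_itv L).
move: e; rewrite /pm h -/(pm p) -(fineK hx) -EFinB => /eqP.
by rewrite eq_sym eqe subr_eq0 => /eqP <-.
Qed.

Lemma cdf_top (p : ProbOn L) a : (forall z, z \in L -> z <= a) -> cdfL p a = 1%E.
Proof.
move=> h; rewrite /Defs.cdf -(pmL p); congr (pm p _).
by apply/seteqP; split => x /=; [case|move=> hx; split => //; exact: h].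
Qed.

Lemma cdf_diff (p : ProbOn L) t u : t \in L -> u \in L -> t <= u ->
  pm p [set` `]t, u]] = (cdfL p u - cdfL p t)%E.
Proof.
move=> tL uL tu.
have -> : [set` `]t, u]] = Lle u `\` Lle t.
  apply/seteqP; split => x /=; rewrite in_itv /=.
    move=> /andP[h1 h2]; split; first split => //.
      by apply: (itv_conv tL uL) => //; exact: ltW h1.
    by move=> [_ h]; move: h1; rewrite ltNge h.
  by move=> [[hxL h2] h3]; rewrite h2 andbT ltNge; apply/negP => h4; apply: h3; split.
rewrite measureD; try exact: Lle_meas.
  congr (_ - pm p _)%E; apply/seteqP; split => x /=; first by case.
  by move=> [h1 h2]; split => //; split => //; exact: le_trans tu.
by rewrite (le_lt_trans (cdf_le1 p u)) // ltey.
Qed.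

End A.

Section B.
Context (R : realType) (L : interval R) (n : nat) (psi : PAF L n).
Context (hSP : level_SP psi).

Local Notation G p x := (cdfL (psi p) x).

Lemma upd_upd (p : profile L n) i q : upd (upd p i q) i (p i) = p.
Proof. by apply: funext => j; rewrite /upd; case: eqP => // ->. Qed.

Lemma upd_at (p : profile L n) i q : upd p i q i = q.
Proof. by rewrite /upd eqxx. Qed.

Lemma sp_both (p : profile L n) i q x : x \in L ->
  let e := cdfL (p i) x in let A := G p x in let B := G (upd p i q) x in
  ((e < A)%E -> (A <= B)%E) /\ ((e > A)%E -> (A >= B)%E).
Proof. by move=> xL; have [h1 h2] := hSP i p q xL. Qed.

Lemma sp_inv (p : profile L n) i q x : x \in L ->
  cdfL q x = cdfL (p i) x -> G (upd p i q) x = G p x.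
Proof.
move=> xL eq.
have [h1 h2] := hSP i p q xL.
have [h3 h4] := hSP i (upd p i q) (p i) xL.
rewrite upd_upd upd_at eq in h3 h4.
set e := cdfL (p i) x in h1 h2 h3 h4 *.
set A := G p x in h1 h2 h3 h4 *.
set B := G (upd p i q) x in h1 h2 h3 h4 *.
case: (ltgtP e A) => eA.
- have AB := h1 eA; apply/eqP; rewrite eq_le AB andbT; apply: h3.
  exact: lt_le_trans AB.
- have AB := h2 eA; apply/eqP; rewrite eq_le AB /=; apply: h4.
  exact: le_lt_trans eA.
- case: (ltgtP e B) => eB.
  + by have := h3 eB; rewrite -eA => /(lt_le_trans eB); rewrite ltxx.
  + by have := h4 eB; rewrite -eA => /(le_lt_trans)/(_ eB); rewrite ltxx.
  + by rewrite -eA -eB.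
Qed.

Lemma sp_mono (p : profile L n) i q x : x \in L ->
  (cdfL (p i) x <= cdfL q x)%E -> (G p x <= G (upd p i q) x)%E.
Proof.
move=> xL le.
have [h1 h2] := hSP i p q xL.
have [h3 h4] := hSP i (upd p i q) (p i) xL.
rewrite upd_upd upd_at in h3 h4.
case: (ltP (cdfL (p i) x) (G p x)) => eA; first exact: h1.
rewrite leNgt; apply/negP => BA.
have := h4 (lt_le_trans BA (le_trans eA le)).
by rewrite leNgt BA.
Qed.

Lemma sp_up (p : profile L n) i q x : x \in L ->
  (G p x < cdfL (p i) x)%E -> (G p x <= cdfL q x)%E -> G (upd p i q) x = G p x.
Proof.
move=> xL lt le.
have [h1 h2] := hSP i p q xL.
have [h3 h4] := hSP i (upd p i q) (p i) xL.
rewrite upd_upd upd_at in h3 h4.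
have BA := h2 lt.
apply/eqP; rewrite eq_le BA /=; rewrite leNgt; apply/negP => BA'.
have := h4 (lt_le_trans BA' le); rewrite leNgt BA' //.
Qed.

Lemma sp_dn (p : profile L n) i q x : x \in L ->
  (cdfL (p i) x < G p x)%E -> (cdfL q x <= G p x)%E -> G (upd p i q) x = G p x.
Proof.
move=> xL lt le.
have [h1 h2] := hSP i p q xL.
have [h3 h4] := hSP i (upd p i q) (p i) xL.
rewrite upd_upd upd_at in h3 h4.
have AB := h1 lt.
apply/eqP; rewrite eq_le AB andbT; rewrite leNgt; apply/negP => AB'.
have := h3 (le_lt_trans le AB'); rewrite leNgt AB' //.
Qed.

Definition merge (K : pred 'I_n) (p q : profile L n) : profile L n :=
  fun j => if K j then q j else p j.

Lemma iter (Inv : profile L n -> Prop) (K : pred 'I_n) (p q : profile L n) :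
  (forall r i, K i -> r i = p i -> Inv r -> Inv (upd r i (q i))) ->
  Inv p -> Inv (merge K p q).
Proof.
move=> step Ip.
pose r k : profile L n := fun j => if K j && (j < k)%N then q j else p j.
have r0 : r 0%N = p by apply: funext => j; rewrite /r andbF.
have rn : r n = merge K p q by apply: funext => j; rewrite /r /merge ltn_ord andbT.
suff : forall k, Inv (r k) by move/(_ n); rewrite rn.
elim => [|k IH]; first by rewrite r0.
case: (ltnP k n) => hk; last first.
  suff -> : r k.+1 = r k by [].
  apply: funext => j; rewrite /r.
  by rewrite (leq_trans (ltn_ord j) hk) ltnS (ltnW (leq_trans (ltn_ord j) hk)).
set i := Ordinal hk.
case Ki : (K i).
  suff -> : r k.+1 = upd (r k) i (q i).
    by apply: step => //; rewrite /r ltnn andbF.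
  apply: funext => j; rewrite /r /upd.
  case: eqP => [->|ne]; first by rewrite Ki /= ltnSn.
  congr (if _ then _ else _); rewrite ltnS leq_eqVlt.
  suff -> : (val j == k) = false by [].
  by apply/eqP => h; apply: ne; apply: val_inj.
suff -> : r k.+1 = r k by [].
apply: funext => j; rewrite /r.
case: (eqVneq j i) => [->|ne]; first by rewrite Ki.
congr (if _ then _ else _); rewrite ltnS leq_eqVlt.
suff -> : (val j == k) = false by [].
by apply/eqP => h; move: ne; rewrite (_ : j = i) ?eqxx //; apply: val_inj.
Qed.

Lemma merge_all (p q : profile L n) : merge predT p q = q.
Proof. by apply: funext. Qed.

Lemma inv_all (p q : profile L n) x : x \in L ->
  (forall j, cdfL (q j) x = cdfL (p j) x) -> G q x = G p x.
Proof.
move=> xL h; rewrite -(merge_all p q).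
apply: (iter (Inv := fun r => G r x = G p x)) => // r i _ ri <-.
by apply: sp_inv => //; rewrite ri h.
Qed.

Lemma mono_all (p q : profile L n) x : x \in L ->
  (forall j, (cdfL (p j) x <= cdfL (q j) x)%E) -> (G p x <= G q x)%E.
Proof.
move=> xL h; rewrite -(merge_all p q).
apply: (iter (Inv := fun r => (G p x <= G r x)%E)) => // r i _ ri hr.
by apply: (le_trans hr); apply: sp_mono => //; rewrite ri h.
Qed.

Lemma LB (p B : profile L n) x (S : pred 'I_n) (m : \bar R) : x \in L ->
  (forall j, S j -> cdfL (B j) x = 1%E) -> (forall j, ~~ S j -> cdfL (B j) x = 0%E) ->
  (m <= G B x)%E -> (forall j, S j -> (m <= cdfL (p j) x)%E) -> (m <= G p x)%E.
Proof.
move=> xL B1 B0 mB mp; rewrite leNgt; apply/negP => gm.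
set g := G p x in gm.
have Hr : G (merge S p B) x = g.
  apply: (iter (Inv := fun r => G r x = g)) => // r i Si ri hr.
  rewrite -hr; apply: sp_up => //; rewrite hr.
    by rewrite ri (lt_le_trans gm) // mp.
  by rewrite B1 // /g cdf_le1.
have : (G B x <= G (merge S p B) x)%E.
  apply: mono_all => // j; rewrite /merge; case: (boolP (S j)) => // Sj.
  by rewrite B0 // cdf_ge0.
by rewrite Hr => /(le_trans mB); rewrite leNgt gm.
Qed.

Lemma UB (p B : profile L n) x (S : pred 'I_n) (M : \bar R) : x \in L ->
  (forall j, S j -> cdfL (B j) x = 1%E) -> (forall j, ~~ S j -> cdfL (B j) x = 0%E) ->
  (G B x <= M)%E -> (forall j, ~~ S j -> (cdfL (p j) x <= M)%E) -> (G p x <= M)%E.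
Proof.
move=> xL B1 B0 mB mp; rewrite leNgt; apply/negP => gm.
set g := G p x in gm.
have Hr : G (merge (predC S) p B) x = g.
  apply: (iter (Inv := fun r => G r x = g)) => // r i Si ri hr.
  rewrite -hr; apply: sp_dn => //; rewrite hr.
    by rewrite ri (le_lt_trans _ gm) // mp.
  by rewrite B0 // /g cdf_ge0.
have : (G (merge (predC S) p B) x <= G B x)%E.
  apply: mono_all => // j; rewrite /merge /=; case: (boolP (S j)) => //= Sj.
  by rewrite B1 // cdf_le1.
by rewrite Hr => /le_trans/(_ mB); rewrite leNgt gm.
Qed.

End B.

Section C0.
Context (R : realType) (L : interval R) (dflt : ProbOn L).

Definition dirP (z : R) : ProbOn L := mkP dflt [:: 1] [:: z].

Lemma cdf_dirP z y : z \in L -> cdfL (dirP z) y = (if z <= y then 1 else 0)%:E.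
Proof.
move=> zL; rewrite /dirP cdf_mkP.
  by rewrite big_ord1 /= mul1r.
split; last by rewrite big_ord1.
by case => //= _; split.
Qed.

Definition P4 (c0 c1 c2 c3 z0 z1 z2 z3 z4 : R) : ProbOn L :=
  mkP dflt [:: c0; c1 - c0; c2 - c1; c3 - c2; 1 - c3] [:: z0; z1; z2; z3; z4].

Lemma cdfP4 (c0 c1 c2 c3 z0 z1 z2 z3 z4 : R) :
  0 <= c0 -> c0 <= c1 -> c1 <= c2 -> c2 <= c3 -> c3 <= 1 ->
  z0 \in L -> z4 \in L -> z0 < z1 -> z1 < z2 -> z2 < z3 -> z3 < z4 ->
  let P := P4 c0 c1 c2 c3 z0 z1 z2 z3 z4 in
  [/\ cdfL P z0 = c0%:E, cdfL P z1 = c1%:E, cdfL P z2 = c2%:E & cdfL P z3 = c3%:E].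
Proof.
move=> h0 h1 h2 h3 h4 z0L z4L l01 l12 l23 l34 P.
have l02 := lt_trans l01 l12; have l03 := lt_trans l02 l23.
have l13 := lt_trans l12 l23; have l14 := lt_trans l13 l34.
have l24 := lt_trans l23 l34; have l04 := lt_trans l03 l34.
have zL : forall z, z0 <= z -> z <= z4 -> z \in L.
  by move=> z a b; apply: (itv_conv z0L z4L).
have cnd : Cond L [:: c0; c1 - c0; c2 - c1; c3 - c2; 1 - c3] [:: z0; z1; z2; z3; z4].
  split.
    case=> [|[|[|[|[|//]]]]] _ /=; (split; [rewrite ?subr_ge0 // | ]);
    by apply: zL; rewrite ?lexx ?(ltW l01) ?(ltW l02) ?(ltW l03) ?(ltW l04)
       ?(ltW l14) ?(ltW l24) ?(ltW l34).
  by rewrite !big_ord_recl big_ord0 /=; lra.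
rewrite /P /P4; split; rewrite cdf_mkP //= !big_ord_recl big_ord0 /=;
  rewrite ?lexx ?(ltW l01) ?(ltW l02) ?(ltW l03) ?(ltW l12) ?(ltW l13) ?(ltW l23);
  rewrite ?(lt_geF l01) ?(lt_geF l02) ?(lt_geF l03) ?(lt_geF l04) ?(lt_geF l12) ?(lt_geF l13) ?(lt_geF l14)
          ?(lt_geF l23) ?(lt_geF l24) ?(lt_geF l34);
  congr (_%:E); lra.
Qed.

End C0.

Section C.
Context (R : realType) (L : interval R) (n : nat) (psi : PAF L n).
Context (hSP : level_SP psi) (hU : unanimous psi)
  (hSPP : strong_plausibility_preserving psi) (dflt : ProbOn L).

Local Notation G p x := (cdfL (psi p) x).
Local Notation dirP := (dirP dflt).

Lemma unanG q y : y \in L -> G (fun _ => q) y = cdfL q y.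
Proof. by move=> yL; exact: (hU q (Lle_meas L y) (Lle_sub (L:=L) (a:=y))). Qed.

Lemma UB0 (p : profile L n) y w (M : \bar R) : y \in L -> w \in L -> y < w ->
  (0 <= M)%E -> (forall j, (cdfL (p j) y <= M)%E) -> (G p y <= M)%E.
Proof.
move=> yL wL yw M0 h.
apply: (UB hSP (B := fun _ => dirP w) (S := pred0)) => //.
- by move=> j _; rewrite cdf_dirP // (lt_geF yw).
- by rewrite unanG // cdf_dirP // (lt_geF yw) /=.
Qed.

Lemma LB1 (p : profile L n) y z (M : \bar R) : y \in L -> z \in L -> z <= y ->
  (M <= 1)%E -> (forall j, (M <= cdfL (p j) y)%E) -> (M <= G p y)%E.
Proof.
move=> yL zL zy M1 h.
apply: (LB hSP (B := fun _ => dirP z) (S := predT)) => //.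
- by move=> j _; rewrite cdf_dirP // zy.
- by rewrite unanG // cdf_dirP // zy.
Qed.

Lemma viol (p : profile L n) z0 z1 z2 z3 : z0 \in L -> z3 \in L ->
  z0 < z1 -> z1 < z2 -> z2 < z3 ->
  (forall j, (cdfL (p j) z0 < cdfL (p j) z1)%E \/ (cdfL (p j) z2 < cdfL (p j) z3)%E) ->
  (G p z1 <= G p z0)%E -> (G p z3 <= G p z2)%E -> False.
Proof.
move=> z0L z3L l01 l12 l23 hj g1 g2.
have z1L : z1 \in L by apply: (itv_conv z0L z3L); [exact: ltW|exact: ltW (lt_trans l12 l23)].
have z2L : z2 \in L by apply: (itv_conv z0L z3L); [exact: ltW (lt_trans l01 l12)|exact: ltW].
set I1 := [set` `]z0, z1]]; set I2 := [set` `]z2, z3]].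
have m1 : measurable I1 by exact: measurable_itv.
have m2 : measurable I2 by exact: measurable_itv.
have sub1 : I1 `<=` [set` L].
  move=> x; rewrite /I1 /= in_itv /= => /andP[a b].
  by apply: (itv_conv z0L z3L); [exact: ltW|exact: le_trans b (ltW (lt_trans l12 l23))].
have sub2 : I2 `<=` [set` L].
  move=> x; rewrite /I2 /= in_itv /= => /andP[a b].
  by apply: (itv_conv z0L z3L); [exact: ltW (lt_trans (lt_trans l01 l12) a)|].
have dis : I1 `&` I2 = set0.
  apply/seteqP; split => // x [h1 h2]; move: h1 h2.
  rewrite /I1 /I2 /= !in_itv /= => /andP[_ a] /andP[b _].
  by move: (le_lt_trans a (lt_trans l12 b)); rewrite ltxx.
have mA : measurable (I1 `|` I2) by exact: measurableU.
have subA : I1 `|` I2 `<=` [set` L] by rewrite subUset; split.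
have pos : forall j, (0 < pm (p j) (I1 `|` I2))%E.
  move=> j; case: (hj j) => lt.
    have le1 : (pm (p j) I1 <= pm (p j) (I1 `|` I2))%E.
      by apply: le_measure; rewrite ?inE //; exact: subsetUl.
    apply: lt_le_trans le1.
    by rewrite cdf_diff //; [rewrite sube_gt0|exact: ltW].
  have le1 : (pm (p j) I2 <= pm (p j) (I1 `|` I2))%E.
    by apply: le_measure; rewrite ?inE //; exact: subsetUr.
  apply: lt_le_trans le1.
  by rewrite cdf_diff //; [rewrite sube_gt0|exact: ltW].
have := hSPP mA subA pos.
have eU : pm (psi p) (I1 `|` I2) = (pm (psi p) I1 + pm (psi p) I2)%E by exact: measureU.
rewrite eU /I1 /I2 !cdf_diff //; try exact: ltW.
by rewrite ltNge adde_le0 // sube_le0.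
Qed.


Lemma viol_gen (c0 c1 c2 c3 : 'I_n -> R) z0 z1 z2 z3 z4 :
  z0 \in L -> z4 \in L -> z0 < z1 -> z1 < z2 -> z2 < z3 -> z3 < z4 ->
  (forall j, [/\ 0 <= c0 j, c0 j <= c1 j, c1 j <= c2 j, c2 j <= c3 j & c3 j <= 1]) ->
  (forall j, c0 j < c1 j \/ c2 j < c3 j) ->
  (forall p : profile L n, (forall j, [/\ cdfL (p j) z0 = (c0 j)%:E,
      cdfL (p j) z1 = (c1 j)%:E, cdfL (p j) z2 = (c2 j)%:E & cdfL (p j) z3 = (c3 j)%:E]) ->
     (G p z1 <= G p z0)%E /\ (G p z3 <= G p z2)%E) -> False.
Proof.
move=> z0L z4L l01 l12 l23 l34 hc hs hb.
pose p : profile L n := fun j => P4 dflt (c0 j) (c1 j) (c2 j) (c3 j) z0 z1 z2 z3 z4.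
have hp : forall j, [/\ cdfL (p j) z0 = (c0 j)%:E,
      cdfL (p j) z1 = (c1 j)%:E, cdfL (p j) z2 = (c2 j)%:E & cdfL (p j) z3 = (c3 j)%:E].
  by move=> j; have [? ? ? ? ?] := hc j; apply: cdfP4.
have [b1 b2] := hb p hp.
have z3L : z3 \in L.
  apply: (itv_conv z0L z4L); last exact: ltW.
  exact: ltW (lt_trans l01 (lt_trans l12 l23)).
apply: (viol z0L z3L l01 l12 l23 _ b1 b2) => j.
have [-> -> -> ->] := hp j; rewrite !lte_fin; exact: hs.
Qed.

Definition bin (S : pred 'I_n) x w : profile L n := fun j => if S j then dirP x else dirP w.

Lemma bin1 (S : pred 'I_n) x w y j : x \in L -> w \in L -> x <= y -> y < w -> S j ->
  cdfL (bin S x w j) y = 1%E.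
Proof. by move=> xL wL xy yw Sj; rewrite /bin Sj cdf_dirP // xy. Qed.

Lemma bin0 (S : pred 'I_n) x w y j : x \in L -> w \in L -> x <= y -> y < w -> ~~ S j ->
  cdfL (bin S x w j) y = 0%E.
Proof. by move=> xL wL xy yw Sj; rewrite /bin (negbTE Sj) cdf_dirP // (lt_geF yw). Qed.

Lemma F1 (S : pred 'I_n) x v : x \in L -> v \in L -> x < v ->
  (0 < G (bin S x v) x)%E -> (0 < G (bin (predC S) x v) x)%E -> False.
Proof.
move=> xL vL xv g1 g2.
set B := bin S x v; set B' := bin (predC S) x v.
have fB := cdf_fin (psi B) x; have fB' := cdf_fin (psi B') x.
pose e := Num.min (fine (G B x)) (fine (G B' x)).
have eB : (e%:E <= G B x)%E by rewrite -(fineK fB) lee_fin ge_min lexx.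
have eB' : (e%:E <= G B' x)%E by rewrite -(fineK fB') lee_fin ge_min lexx orbT.
have e0 : 0 < e.
  rewrite lt_min; apply/andP; split; rewrite -lte_fin fineK //.
have e1 : e <= 1 by rewrite -lee_fin (le_trans eB) // cdf_le1.
pose d := (v - x) / 4.
have d0 : 0 < d by rewrite /d divr_gt0 // subr_gt0.
have vE : v = x + 4 * d by rewrite /d; field.
have inL : forall y, x <= y -> y <= v -> y \in L.
  by move=> y a b; exact: (itv_conv xL vL).
apply: (viol_gen (c0 := fun j => if S j then 0 else e / 2)
  (c1 := fun j => if S j then e / 4 else e / 2)
  (c2 := fun j => if S j then 3 * e / 4 else e / 2)
  (c3 := fun j => if S j then 3 * e / 4 else 5 * e / 8)
  (z0 := x) (z1 := x + d) (z2 := x + 2 * d) (z3 := x + 3 * d) (z4 := v)) => //;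
  try lra; try (rewrite vE; lra); try (by move=> j; case: (S j); split; lra);
  try (by move=> j; case: (S j); [left|right]; lra).
have z1L : x + d \in L by apply: inL; lra.
have z2L : x + 2 * d \in L by apply: inL; lra.
have z3L : x + 3 * d \in L by apply: inL; lra.
move=> p hp; split.
- apply: (@le_trans _ _ (e / 2)%:E).
    apply: (UB0 (w := v)) => //; first lra.
      by rewrite lee_fin; lra.
    by move=> j; have [_ -> _ _] := hp j; case: (S j); rewrite lee_fin; lra.
  apply: (LB hSP (B := B') (S := predC S)) => //.
  - by move=> j Sj; apply: bin1 => //; rewrite lexx.
  - by move=> j Sj; apply: bin0 => //; rewrite lexx.
  - by apply: le_trans eB'; rewrite lee_fin; lra.
  - by move=> j /= Sj; have [-> _ _ _] := hp j; rewrite (negbTE Sj) lee_fin.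
- apply: (@le_trans _ _ (3 * e / 4)%:E).
    apply: (UB0 (w := v)) => //; first lra.
      by rewrite lee_fin; lra.
    by move=> j; have [_ _ _ ->] := hp j; case: (S j); rewrite lee_fin; lra.
  apply: (LB hSP (B := B) (S := S)) => //.
  - by move=> j Sj; apply: bin1 => //; lra.
  - by move=> j Sj; apply: bin0 => //; lra.
  - apply: le_trans (le_trans eB _); first by rewrite lee_fin; lra.
    by apply: cdf_mono; lra.
  - by move=> j Sj; have [_ _ -> _] := hp j; rewrite Sj lee_fin.
Qed.

Lemma F2 (S : pred 'I_n) z x v : z \in L -> v \in L -> z < x -> x < v ->
  (G (bin S z v) x < 1)%E -> (G (bin (predC S) z v) x < 1)%E -> False.
Proof.
move=> zL vL zx xv g1 g2.
have xL : x \in L by apply: (itv_conv zL vL); exact: ltW.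
set B := bin S z v; set B' := bin (predC S) z v.
have fB := cdf_fin (psi B) x; have fB' := cdf_fin (psi B') x.
pose e := Num.max (fine (G B x)) (fine (G B' x)).
have eB : (G B x <= e%:E)%E by rewrite -(fineK fB) lee_fin le_max lexx.
have eB' : (G B' x <= e%:E)%E by rewrite -(fineK fB') lee_fin le_max lexx orbT.
have e1 : e < 1.
  rewrite gt_max; apply/andP; split; rewrite -lte_fin fineK //.
have e0 : 0 <= e by rewrite -lee_fin (le_trans _ eB) // cdf_ge0.
pose h := 1 - e.
have h0 : 0 < h by rewrite /h subr_gt0.
have hE : h = 1 - e by [].
clearbody h.
pose d := (x - z) / 4.
have d0 : 0 < d by rewrite /d divr_gt0 // subr_gt0.
have xE : x = z + 4 * d by rewrite /d; field.
have inL : forall y, z <= y -> y <= v -> y \in L.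
  by move=> y a b; exact: (itv_conv zL vL).
have z1L : z + d \in L by apply: inL; lra.
have z2L : z + 2 * d \in L by apply: inL; lra.
have z3L : z + 3 * d \in L by apply: inL; lra.
apply: (viol_gen (c0 := fun j => e)
  (c1 := fun j => if S j then e else e + h / 4)
  (c2 := fun j => if S j then e + h / 2 else e + h / 4)
  (c3 := fun j => if S j then e + 3 * h / 4 else e + h / 4)
  (z0 := z) (z1 := z + d) (z2 := z + 2 * d) (z3 := z + 3 * d) (z4 := x)) => //;
  try lra; try (by move=> j; case: (S j); split; lra);
  try (by move=> j; case: (S j); [right|left]; lra).
move=> p hp; split.
- apply: (@le_trans _ _ e%:E).
    apply: (UB hSP (B := B') (S := predC S)) => //.
    + by move=> j Sj; apply: bin1 => //; lra.
    + by move=> j Sj; apply: bin0 => //; lra.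
    + by apply: le_trans eB'; apply: cdf_mono; lra.
    + by move=> j /= Sj; have [_ -> _ _] := hp j; rewrite negbK in Sj; rewrite Sj.
  apply: (LB1 (z := z)) => //; first by rewrite lee_fin; lra.
  by move=> j; have [-> _ _ _] := hp j.
- apply: (@le_trans _ _ (e + h / 4)%:E).
    apply: (UB hSP (B := B) (S := S)) => //.
    + by move=> j Sj; apply: bin1 => //; lra.
    + by move=> j Sj; apply: bin0 => //; lra.
    + apply: le_trans (le_trans _ eB) _; first by apply: cdf_mono; lra.
      by rewrite lee_fin; lra.
    + by move=> j Sj; have [_ _ _ ->] := hp j; rewrite (negbTE Sj).
  apply: (LB1 (z := z)) => //; first lra.
    by rewrite lee_fin; lra.
  by move=> j; have [_ _ -> _] := hp j; case: (S j); rewrite lee_fin; lra.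
Qed.

Definition isbin x (B : profile L n) (S : {set 'I_n}) :=
  forall j, cdfL (B j) x = (if j \in S then 1 else 0)%:E.

Definition interior x := x \in L /\ (exists z, z \in L /\ z < x) /\ (exists v, v \in L /\ x < v).

Definition Wp x S := forall B, isbin x B S -> G B x = 1%E.
Definition Zp x S := forall B, isbin x B S -> G B x = 0%E.

Lemma isbin_bin (S : {set 'I_n}) x w y : x \in L -> w \in L -> x <= y -> y < w ->
  isbin y (bin (fun j => j \in S) x w) S.
Proof.
move=> xL wL xy yw j; case: ifP => h.
  by apply: bin1.
by apply: bin0 => //; rewrite h.
Qed.

Lemma isbin_eq x B B' S : x \in L -> isbin x B S -> isbin x B' S -> G B x = G B' x.
Proof. by move=> xL h h'; apply: (inv_all hSP) => // j; rewrite h h'. Qed.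

Lemma WZ_excl x S : interior x -> Wp x S -> Zp x S -> False.
Proof.
move=> [xL [_ [v [vL xv]]]] hW hZ.
have hb := isbin_bin S xL vL (lexx x) xv.
by have := hW _ hb; rewrite hZ // => /eqP; rewrite eq_sym onee_eq0.
Qed.

Lemma dich x S : interior x -> (Wp x S /\ Zp x (~: S)) \/ (Zp x S /\ Wp x (~: S)).
Proof.
move=> [xL [[z [zL zx]] [v [vL xv]]]].
have hb := isbin_bin S xL vL (lexx x) xv.
have hb' := isbin_bin (~: S) xL vL (lexx x) xv.
set B := bin _ x v in hb; set B' := bin _ x v in hb'.
have f1 : ~ ((0 < G B x)%E /\ (0 < G B' x)%E).
  move=> [h1 h2]; apply: (F1 xL vL xv h1).
  by rewrite (isbin_eq xL hb' (isbin_bin (~: S) xL vL (lexx x) xv)) in h2;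
     move: h2; congr (_ < cdfL (psi _) _)%E; apply: funext => j; rewrite /bin /= !inE.
have f2 : ~ ((G B x < 1)%E /\ (G B' x < 1)%E).
  move=> [h1 h2]; apply: (F2 (S := fun j => j \in S) zL vL zx xv).
    by rewrite (isbin_eq xL (isbin_bin S zL vL (ltW zx) xv) hb).
  rewrite (_ : bin _ z v = bin (fun j => j \in ~: S) z v); last first.
    by apply: funext => j; rewrite /bin /= !inE.
  by rewrite (isbin_eq xL (isbin_bin (~: S) zL vL (ltW zx) xv) hb').
have g0 := cdf_ge0 (psi B) x; have g1 := cdf_le1 (psi B) x.
have g0' := cdf_ge0 (psi B') x; have g1' := cdf_le1 (psi B') x.
have WB : forall C S', isbin x C S' -> isbin x B S' -> G C x = G B x.
  by move=> C S' hC hB; apply: isbin_eq hC hB.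
case: (ltP 0%E (G B x)) => hB.
  have eB' : G B' x = 0%E.
    apply/eqP; rewrite eq_le g0' andbT leNgt; apply/negP => h; exact: f1.
  have eB : G B x = 1%E.
    apply/eqP; rewrite eq_le g1 /= leNgt; apply/negP => h; apply: f2; split => //.
    by rewrite eB'.
  left; split => C hC.
    by rewrite (isbin_eq xL hC hb).
  by rewrite (isbin_eq xL hC hb').
have eB : G B x = 0%E by apply/eqP; rewrite eq_le hB g0.
have eB' : G B' x = 1%E.
  apply/eqP; rewrite eq_le g1' /= leNgt; apply/negP => h; apply: f2; split => //.
  by rewrite eB.
right; split => C hC.
  by rewrite (isbin_eq xL hC hb).
by rewrite (isbin_eq xL hC hb').
Qed.

End C.

Section D.
Context (R : realType) (L : interval R) (n : nat) (psi : PAF L n).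
Context (hSP : level_SP psi) (hU : unanimous psi)
  (hSPP : strong_plausibility_preserving psi) (dflt : ProbOn L).

Local Notation G p x := (cdfL (psi p) x).
Local Notation Wp := (Wp psi).
Local Notation Zp := (Zp psi).
Local Notation isbin := (@isbin R L n).
Local Notation bin := (bin dflt).
Local Notation interior := (interior L).

Lemma ex_bin x S : interior x -> exists B, isbin x B S.
Proof.
move=> [xL [_ [v [vL xv]]]]; exists (bin (fun j => j \in S) x v).
exact: isbin_bin.
Qed.

Lemma Wmono x y S : interior x -> interior y -> x < y -> Wp x S -> Wp y S.
Proof.
move=> ix [yL [_ [w [wL yw]]]] xy hW C hC.
have xL := ix.1.
have hx := isbin_bin dflt S xL wL (lexx x) (lt_trans xy yw).
have hy := isbin_bin dflt S xL wL (ltW xy) yw.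
rewrite (isbin_eq hSP yL hC hy).
apply/eqP; rewrite eq_le cdf_le1 /= -(hW _ hx); exact: cdf_mono (ltW xy).
Qed.

Lemma Wdown x y S : interior x -> interior y -> x < y -> Wp y S -> Wp x S.
Proof.
move=> ix iy xy hW.
case: (dich hSP hU hSPP dflt S ix) => [[]//|[_ hC]].
have := Wmono ix iy xy hC.
case: (dich hSP hU hSPP dflt S iy) => [[_ hZ] hW'|[hZ _]].
  by case: (WZ_excl dflt iy hW' hZ).
by case: (WZ_excl dflt iy hW hZ).
Qed.

Lemma Wconst x y S : interior x -> interior y -> Wp x S -> Wp y S.
Proof.
move=> ix iy; case: (ltgtP x y) => xy.
- exact: Wmono.
- exact: Wdown.
- by rewrite xy.
Qed.

Lemma Wnot x S : interior x -> ~ Wp x S -> Zp x S /\ Wp x (~: S).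
Proof. by move=> ix nW; case: (dich hSP hU hSPP dflt S ix) => [[]|]. Qed.

Lemma Wcompl x S : interior x -> Wp x S -> Zp x (~: S).
Proof.
move=> ix hW; case: (dich hSP hU hSPP dflt S ix) => [[]//|[hZ _]].
by case: (WZ_excl dflt ix hW hZ).
Qed.

Lemma LBW (p : profile L n) x S (m : \bar R) : interior x -> Wp x S -> (m <= 1)%E ->
  (forall j, j \in S -> (m <= cdfL (p j) x)%E) -> (m <= G p x)%E.
Proof.
move=> ix hW m1 hm; have [B hB] := ex_bin S ix.
apply: (LB hSP (B := B) (S := fun j => j \in S)) => //.
- exact: ix.1.
- by move=> j Sj; rewrite hB Sj.
- by move=> j Sj; rewrite hB (negbTE Sj).
- by rewrite hW.
Qed.

Lemma UBZ (p : profile L n) x S (M : \bar R) : interior x -> Zp x S -> (0 <= M)%E ->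
  (forall j, j \notin S -> (cdfL (p j) x <= M)%E) -> (G p x <= M)%E.
Proof.
move=> ix hZ m1 hm; have [B hB] := ex_bin S ix.
apply: (UB hSP (B := B) (S := fun j => j \in S)) => //.
- exact: ix.1.
- by move=> j Sj; rewrite hB Sj.
- by move=> j Sj; rewrite hB (negbTE Sj).
- by rewrite hZ.
Qed.

Lemma Wcap S T x0 a b : a \in L -> b \in L -> a < b -> interior x0 ->
  Wp x0 S -> Wp x0 T -> Wp x0 (S :&: T).
Proof.
move=> aL bL ab i0 hS hT.
case: (pselect (Wp x0 (S :&: T))) => // nW; exfalso.
pose d := (b - a) / 5.
have d0 : 0 < d by rewrite /d divr_gt0 // subr_gt0.
have bE : b = a + 5 * d by rewrite /d; field.
have intz : forall k, 0 < k -> k < 5 -> interior (a + k * d).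
  move=> k k0 k5; split; first by apply: (itv_conv aL bL); nra.
  split; first by exists a; split => //; nra.
  by exists b; split => //; nra.
have facts : forall k, 0 < k -> k < 5 ->
   [/\ Wp (a + k * d) S, Zp (a + k * d) (~: T), Zp (a + k * d) (S :&: T)
     & Wp (a + k * d) (~: (S :&: T))].
  move=> k k0 k5; have iz := intz k k0 k5.
  have nW' : ~ Wp (a + k * d) (S :&: T) by move=> h; apply: nW; exact: Wconst iz i0 h.
  have [hZ hW] := Wnot iz nW'.
  split => //; first exact: Wconst i0 iz hS.
  by apply: Wcompl => //; exact: Wconst i0 iz hT.
have [hS1 _ _ _] := facts 1 ltr01 ltac:(lra).
have [_ hT2 _ _] := facts 2 ltac:(lra) ltac:(lra).
have [_ _ _ hC3] := facts 3 ltac:(lra) ltac:(lra).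
have [_ _ hZ4 _] := facts 4 ltac:(lra) ltac:(lra).
apply: (viol_gen hSPP dflt
  (c0 := fun j => if j \in S then 1/4 else 0)
  (c1 := fun j => if j \in S then (if j \in T then 1/4 else 3/8) else 1/8)
  (c2 := fun j => if j \in S then (if j \in T then 1/4 else 3/4) else 3/4)
  (c3 := fun j => if j \in S then (if j \in T then 1/2 else 3/4) else 3/4)
  (z0 := a + 1 * d) (z1 := a + 2 * d) (z2 := a + 3 * d) (z3 := a + 4 * d) (z4 := b));
  try lra.
- exact: (intz 1 ltr01 ltac:(lra)).1.
- exact: bL.
- by move=> j; case: (j \in S); case: (j \in T); split; lra.
- by move=> j; case: (j \in S); case: (j \in T); [right|left|left|left]; lra.
move=> p hp; split.
- apply: (@le_trans _ _ (1/4)%:E).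
    apply: (UBZ (S := ~: T)) => //; first (by apply: intz; lra); try (by rewrite lee_fin; lra).
    move=> j; rewrite inE negbK => jT; have [_ -> _ _] := hp j.
    by rewrite jT; case: (j \in S); rewrite lee_fin; lra.
  apply: (LBW (S := S)) => //; first (by apply: intz; lra); try (by rewrite lee_fin; lra).
  by move=> j jS; have [-> _ _ _] := hp j; rewrite jS.
- apply: (@le_trans _ _ (3/4)%:E).
    apply: (UBZ (S := S :&: T)) => //; first (by apply: intz; lra); try (by rewrite lee_fin; lra).
    move=> j; rewrite inE negb_and => /orP[jS|jT]; have [_ _ _ ->] := hp j.
      by rewrite (negbTE jS).
    by rewrite (negbTE jT); case: (j \in S).
  apply: (LBW (S := ~: (S :&: T))) => //; first (by apply: intz; lra); try (by rewrite lee_fin; lra).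
  move=> j; rewrite !inE negb_and => /orP[jS|jT]; have [_ _ -> _] := hp j.
    by rewrite (negbTE jS).
  by rewrite (negbTE jT); case: (j \in S).
Qed.

Lemma WsetT x : interior x -> Wp x [set: 'I_n]%SET.
Proof.
move=> ix B hB; have xL := ix.1.
rewrite (inv_all hSP (p := fun _ => dirP dflt x)) //.
  by rewrite unanG // cdf_dirP // lexx.
by move=> j; rewrite hB inE cdf_dirP // lexx.
Qed.

Lemma Wset0 x : interior x -> ~ Wp x finset.set0.
Proof.
move=> ix hW; have xL := ix.1.
have [_ [v [vL xv]]] := ix.2.
have [B hB] := ex_bin finset.set0 ix.
have := hW B hB.
rewrite (inv_all hSP (p := fun _ => dirP dflt v)) //.
  by rewrite unanG // cdf_dirP // (lt_geF xv) => /eqP; rewrite eqe eq_sym oner_eq0.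
by move=> j; rewrite hB inE cdf_dirP // (lt_geF xv).
Qed.

Lemma Wsingle x0 a b : a \in L -> b \in L -> a < b -> interior x0 ->
  exists d, Wp x0 [set d]%SET.
Proof.
move=> aL bL ab i0.
suff : forall k (S : {set 'I_n}), (#|S| <= k)%N -> Wp x0 S -> exists d, Wp x0 [set d]%SET.
  by move/(_ n [set: 'I_n]%SET); apply => //; [rewrite cardsT card_ord|exact: WsetT].
elim => [|k IH] S hk hW.
  by move: hk; rewrite leqn0 cards_eq0 => /eqP S0; move: hW; rewrite S0 => /(Wset0 i0).
case: (leqP #|S| k) => hk'; first exact: IH hk' hW.
have : S != finset.set0 by rewrite -card_gt0 (leq_ltn_trans _ hk').
case/set0Pn => d dS.
case: (pselect (Wp x0 [set d]%SET)) => hd; first by exists d.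
have [_ hC] := Wnot i0 hd.
have := Wcap aL bL ab i0 hW hC.
rewrite -finset.setDE; apply: IH.
by move: (cardsD1 d S); rewrite dS => hc; move: hk; rewrite hc add1n ltnS.
Qed.

Lemma interior_dict d x0 x (p : profile L n) : interior x0 -> Wp x0 [set d]%SET ->
  interior x -> G p x = cdfL (p d) x.
Proof.
move=> i0 hd ix.
have hW := Wconst i0 ix hd.
have hZ := Wcompl ix hW.
apply/eqP; rewrite eq_le; apply/andP; split.
  apply: (UBZ (S := ~: [set d]%SET)) => //.
  by move=> j; rewrite !inE negbK => /eqP ->.
apply: (LBW (S := [set d]%SET)) => //; first exact: cdf_le1.
by move=> j; rewrite !inE => /eqP ->.
Qed.

End D.

Section E.
Context (R : realType) (L : interval R).

Lemma cdf_eq_min (p q : ProbOn L) m c : m \in L -> c \in L -> m < c ->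
  (forall y, m < y -> y < c -> cdfL p y = cdfL q y) -> cdfL p m = cdfL q m.
Proof.
move=> mL cL mc h.
pose e := (c - m) / 2.
have e0 : 0 < e by rewrite /e divr_gt0 // subr_gt0.
pose F k : set R := Lle L (m + Num.min e (k.+1%:R^-1)).
have mF : forall k, measurable (F k) by move=> k; exact: Lle_meas.
have ndF : {homo F : i j / (i <= j)%N >-> (j <= i)%O}.
  move=> i j ij; apply/subsetPset => x [xL hx]; split => //.
  apply: (le_trans hx); rewrite lerD2l le_min ge_min lexx /= ge_min; apply/orP; right.
  by rewrite lef_pV2 ?posrE // ler_nat.
have capF : \bigcap_k F k = Lle L m.
  apply/seteqP; split => x.
    move=> hx; have [xL _] := hx 0%N I; split => //.
    rewrite leNgt; apply/negP => mx.
    have [k hk] := ltr_add_invr mx.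
    have [_ hk'] := hx k I; move: hk'; apply/negP; rewrite -ltNge.
    apply: le_lt_trans hk; rewrite lerD2l ge_min lexx orbT //.
  move=> [xL hx] k _; split => //; apply: (le_trans hx).
  by rewrite lerDl le_min (ltW e0) invr_ge0 ler0n.
have cv : forall P : ProbOn L, (pm P \o F) @ \oo --> pm P (Lle L m).
  move=> P; rewrite -capF; apply: nonincreasing_cvg_mu => //.
    by rewrite (le_lt_trans (probability_le1 _ (mF 0%N))) // ltey.
  by rewrite capF; exact: Lle_meas.
have eqF : pm p \o F = pm q \o F.
  apply: funext => k /=; apply: h.
    by rewrite ltrDl lt_min e0 invr_gt0 ltr0n.
  have : m + Num.min e k.+1%:R^-1 <= m + e by rewrite lerD2l ge_min lexx.
  by move/le_lt_trans; apply; rewrite /e; lra.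
have cp := cv p; have cq := cv q.
rewrite eqF in cp.
by rewrite /Defs.cdf -[LHS](cvg_lim _ cp) // -[RHS](cvg_lim _ cq).
Qed.

Lemma pm_L (p : ProbOn L) X : measurable X -> pm p X = pm p (X `&` [set` L]).
Proof.
move=> mX.
have e1 : pm p X = (pm p (X `\` [set` L]) + pm p (X `&` [set` L]))%E.
  exact: measureDI (measurable_itv L).
suff e2 : pm p (X `\` [set` L]) = 0%E by rewrite e1 e2 add0e.
apply/eqP; rewrite eq_le measure_ge0 andbT -(proj2_sig p).
apply: le_measure; rewrite ?inE.
- by apply: measurableD => //; exact: measurable_itv.
- by apply: measurableC; exact: measurable_itv.
- by move=> x [].
Qed.

Lemma Lle_all (p q : ProbOn L) : (forall y, y \in L -> cdfL p y = cdfL q y) ->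
  forall y, pm p (Lle L y) = pm q (Lle L y).
Proof.
move=> h y; case: (boolP (y \in L)) => yL; first exact: h.
case: (pselect (exists z, z \in L /\ z <= y)) => [[z [zL zy]]|nz].
  have -> : Lle L y = [set` L].
    apply/seteqP; split => x; first by case.
    move=> /= xL; split => //; rewrite leNgt; apply/negP => yx.
    by move: yL; rewrite (itv_conv zL xL zy (ltW yx)).
  by rewrite !pmL.
have -> : Lle L y = set0.
  by apply/seteqP; split => x // [xL xy]; apply: nz; exists x.
by rewrite !measure0.
Qed.

Lemma meq_of_cdf (p q : ProbOn L) : (forall y, y \in L -> cdfL p y = cdfL q y) -> meq p q.
Proof.
move=> h A mA _.
have hE := Lle_all h.
apply: (measure_unique (@ocitv R) (fun k => `]- k%:R, k%:R]%classic)) => //.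
- exact: ocitvI.
- move=> k; exact: is_ocitv.
- apply/seteqP; split => // x _.
  exists (Num.bound `|x|) => //=; rewrite in_itv /=.
  have h1 := archi_boundP (normr_ge0 x).
  apply/andP; split.
    by rewrite ltrNl (le_lt_trans _ h1) // -normrN ler_norm.
  by rewrite (le_trans (ler_norm x)) // ltW.
- move=> X /ocitvP [->|[[x1 x2] /= _ ->]]; first by rewrite !measure0.
  have mI : measurable [set` `]x1, x2]] by exact: measurable_itv.
  rewrite (pm_L p mI) (pm_L q mI).
  have -> : [set` `]x1, x2]] `&` [set` L] = Lle L x2 `\` Lle L x1.
    apply/seteqP; split => x /=.
      rewrite in_itv /= => -[/andP[a b] xL]; split; first by split.
      by move=> [_ c]; move: a; rewrite ltNge c.
    move=> [[xL b] c]; split => //; rewrite in_itv /= b andbT ltNge.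
    by apply/negP => d; apply: c.
  have IE : Lle L x2 `&` Lle L x1 = Lle L (Num.min x1 x2).
    apply/seteqP; split => x /=.
      by move=> [[xL a] [_ b]]; split => //; rewrite le_min a b.
    by move=> [xL]; rewrite le_min => /andP[a b].
  have D : forall P : ProbOn L,
      pm P (Lle L x2 `\` Lle L x1) = (pm P (Lle L x2) - pm P (Lle L (Num.min x1 x2)))%E.
    move=> P; rewrite -IE; apply: measureD; try exact: Lle_meas.
    by rewrite (le_lt_trans (probability_le1 _ (Lle_meas L x2))) // ltey.
  by rewrite !D !hE.
- by move=> k; rewrite (le_lt_trans (probability_le1 _ (measurable_itv _))) // ltey.
Qed.

End E.

Lemma dP_proof (R : realType) (L : interval R) (a : R) : a \in L ->
  (\d_a : probability R R) (~` [set` L]) = 0%E.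
Proof.
by move=> aL; rewrite /= diracE memNset //.
Qed.

Theorem mainTheorem7 (R : realType) (L : interval R)
  (hL : exists a b : R, a \in L /\ b \in L /\ a < b)
  (n : nat) (psi : PAF L n) :
  (level_SP psi /\ unanimous psi /\ strong_plausibility_preserving psi) <->
  dictatorial psi.
Proof.
split.
  move=> [hSP [hU hSPP]].
  have [a [b [aL [bL ab]]]] := hL.
  pose dflt : ProbOn L := exist _ (\d_a : probability R R) (dP_proof aL).
  have i0 : interior L ((a + b) / 2).
    split; first by apply: (itv_conv aL bL); lra.
    by split; [exists a | exists b]; split => //; lra.
  have [d hd] := Wsingle hSP hU hSPP dflt aL bL ab i0.
  exists d => p; apply: meq_of_cdf => y yL.
  case: (pselect (interior L y)) => iy.
    exact: (interior_dict hSP hU hSPP dflt p i0 hd iy).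
  case: (pselect (exists v, v \in L /\ y < v)) => [[v [vL yv]]|nv].
    apply: (cdf_eq_min yL vL yv) => z yz zv.
    apply: (interior_dict hSP hU hSPP dflt p i0 hd).
    split; first by apply: (itv_conv yL vL); exact: ltW.
    by split; [exists y|exists v].
  have top : forall z, z \in L -> z <= y.
    move=> z zL; rewrite leNgt; apply/negP => yz; apply: nv; by exists z.
  by rewrite !cdf_top.
move=> [i hi]; split; [|split].
- move=> j p q a aL.
  have e1 : cdfL (psi p) a = cdfL (p i) a.
    exact: (hi p (Lle L a) (Lle_meas L a) (@Lle_sub R L a)).
  have e2 : cdfL (psi (upd p j q)) a = cdfL (upd p j q i) a.
    exact: (hi (upd p j q) (Lle L a) (Lle_meas L a) (@Lle_sub R L a)).
  case: (eqVneq j i) => [->|ji].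
    by rewrite e1 ltxx; split.
  have : upd p j q i = p i by rewrite /upd eq_sym (negbTE ji).
  by move=> e3; rewrite e2 e3 e1; split.
- by move=> q; exact: hi (fun _ => q).
- move=> p A mA AL pos.
  by rewrite (hi p A mA AL); exact: pos i.
Qed.
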